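(* Let $P$ be the barycentric subdivision of a simplicial complex $K$. Then the interval monoid $\mathcal{M}(P)$ is a gcd-monoid.
   Context: A simplicial complex $K$ is a collection of nonempty finite subsets (simplices) of a vertex set with all singletons simplices and closed under nonempty subsets. Its barycentric subdivision is the poset of all simplices of $K$ ordered by inclusion. For a poset $P$, $\mathcal{M}(P)$ is the monoid presented by generators $[x,y]$ for $x\le y$ in $P$, relations $[x,x]=1$ and $[x,z]=[x,y][y,z]$ for $x\le y\le z$. A gcd-monoid is a monoid that is conical ($xy=1\Rightarrow x=1$), left and right cancellative, and in which any two elements have a greatest lower bound for left divisibility ($a\leqslant b$ iff $b=ax$ for some $x$) and for right divisibility ($a\mathbin{\widetilde\leqslant}b$ iff $b=xa$ for some $x$). *)

(* Defs.v *)
From Stdlib Require Import List Relations.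
Import ListNotations.
Set Implicit Arguments.

(* A simplex is a subset of the vertex type V, represented as a predicate. *)
Definition finite_pred (V : Type) (S : V -> Prop) : Prop :=
  exists l : list V, forall v, S v <-> In v l.

Definition subpred (V : Type) (S T : V -> Prop) : Prop := forall v, S v -> T v.

Record simplicial_complex (V : Type) (K : (V -> Prop) -> Prop) : Prop := {
  sc_nonempty : forall S, K S -> exists v, S v;
  sc_finite : forall S, K S -> finite_pred S;
  sc_singleton : forall v : V, K (fun u => u = v);
  sc_down : forall S T, K S -> (exists v, T v) -> subpred T S -> K T
}.

(* A poset P is given by a carrier predicate inP on a type T and an order le.
   Words in the generators [x,y] (x <= y in P) are lists of pairs (x,y). *)
Definition gen_ok (T : Type) (inP : T -> Prop) (le : T -> T -> Prop) (p : T * T) : Prop :=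
  inP (fst p) /\ inP (snd p) /\ le (fst p) (snd p).

Definition word_ok (T : Type) (inP : T -> Prop) (le : T -> T -> Prop) (w : list (T * T)) : Prop :=
  Forall (gen_ok inP le) w.

Inductive mstep (T : Type) (inP : T -> Prop) (le : T -> T -> Prop) :
    list (T * T) -> list (T * T) -> Prop :=
| mstep_id : forall x u w, inP x ->
    mstep inP le (u ++ (x, x) :: w) (u ++ w)
| mstep_split : forall x y z u w, inP x -> inP y -> inP z -> le x y -> le y z ->
    mstep inP le (u ++ (x, z) :: w) (u ++ (x, y) :: (y, z) :: w).

Definition meq (T : Type) (inP : T -> Prop) (le : T -> T -> Prop) :
    list (T * T) -> list (T * T) -> Prop :=
  clos_refl_sym_trans _ (mstep inP le).

(* ---------- gcd-monoids, for a monoid presented as words modulo a congruence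
   (product = concatenation, unit = empty word) ---------- *)
Section GcdMonoid.
Variables (A : Type) (ok : list A -> Prop) (eqv : list A -> list A -> Prop).

Definition ldiv (a b : list A) : Prop := exists x, ok x /\ eqv b (a ++ x).
Definition rdiv (a b : list A) : Prop := exists x, ok x /\ eqv b (x ++ a).

Definition is_gcd_monoid : Prop :=
  (forall x y, ok x -> ok y -> eqv (x ++ y) [] -> eqv x []) /\
  (forall c a b, ok c -> ok a -> ok b -> eqv (c ++ a) (c ++ b) -> eqv a b) /\
  (forall c a b, ok c -> ok a -> ok b -> eqv (a ++ c) (b ++ c) -> eqv a b) /\
  (forall a b, ok a -> ok b -> exists d, ok d /\ ldiv d a /\ ldiv d b /\
      forall e, ok e -> ldiv e a -> ldiv e b -> ldiv e d) /\
  (forall a b, ok a -> ok b -> exists d, ok d /\ rdiv d a /\ rdiv d b /\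
      forall e, ok e -> rdiv e a -> rdiv e b -> rdiv e d).
End GcdMonoid.

Definition interval_monoid_gcd (T : Type) (inP : T -> Prop) (le : T -> T -> Prop) : Prop :=
  is_gcd_monoid (word_ok inP le) (meq inP le).

(* Main.v *)
Require Import Defs.
From Stdlib Require Import List Relations.
Import ListNotations.

Section Gen.
Variable T : Type.
Variable inP : T -> Prop.
Variable le : T -> T -> Prop.
Variable dec : forall a b : T, {a = b} + {a <> b}.
Hypothesis antisym : forall a b, le a b -> le b a -> a = b.
Hypothesis lerefl : forall a, le a a.
Hypothesis letrans : forall a b c, le a b -> le b c -> le a c.
Variable meet : T -> T -> T -> T.
Hypothesis meet_spec : forall x y y', inP x -> inP y -> inP y' -> le x y -> le x y' ->
  inP (meet x y y') /\ le x (meet x y y') /\ le (meet x y y') y /\ le (meet x y y') y' /\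
  forall t, inP t -> le x t -> le t y -> le t y' -> le t (meet x y y').

Notation ok := (word_ok inP le).
Notation gok := (gen_ok inP le).
Notation meq := (meq inP le).

Definition push (g : T*T) (r : list (T*T)) : list (T*T) :=
  let (x,y) := g in if dec x y then r else
  match r with
  | (y',z)::r' => if dec y y' then (x,z)::r' else (x,y)::r
  | [] => [(x,y)] end.

Definition act (u s : list (T*T)) := fold_right push s u.
Definition nf u := act u [].

Lemma push_triv x r : push (x,x) r = r.
Proof. unfold push. destruct (dec x x); congruence. Qed.

Lemma push_comp x y z t : le x y -> le y z -> push (x,y) (push (y,z) t) = push (x,z) t.
Proof.
  intros Hxy Hyz.
  destruct (dec y z) as [<-|Hyz'].
  { rewrite push_triv. reflexivity. }
  destruct (dec x y) as [<-|Hxy'].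
  { rewrite push_triv. reflexivity. }
  assert (Hxz : x <> z).
  { intros <-. apply Hxy'. apply antisym; auto. }
  unfold push.
  destruct (dec y z); try congruence.
  destruct (dec x z); try congruence.
  destruct (dec x y); try congruence.
  destruct t as [|[z' w] t'].
  - destruct (dec y y); congruence.
  - destruct (dec z z') as [<-|Hn].
    + destruct (dec y y); congruence.
    + destruct (dec y y); congruence.
Qed.

Lemma act_app u w s : act (u ++ w) s = act u (act w s).
Proof. unfold act. apply fold_right_app. Qed.

Lemma mstep_nf a b : mstep inP le a b -> nf a = nf b.
Proof.
  intros H; destruct H; unfold nf; rewrite !act_app; unfold act at 2 4; cbn [fold_right]; fold (act w []).
  - rewrite push_triv; reflexivity.
  - rewrite push_comp; auto.
Qed.

Lemma meq_nf a b : meq a b -> nf a = nf b.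
Proof.
  intros H; induction H; auto using mstep_nf; congruence.
Qed.

Definition hd_ne (y:T) (w: list (T*T)) := match w with (x',_)::_ => y <> x' | [] => True end.
Fixpoint red (w : list (T*T)) : Prop :=
  match w with [] => True | (x,y)::w' => x <> y /\ hd_ne y w' /\ red w' end.

Lemma push_ok g r : gok g -> ok r -> ok (push g r).
Proof.
  destruct g as [x y]; intros Hg Hr. unfold push.
  destruct (dec x y); auto.
  destruct r as [|[y' z] r'].
  - constructor; auto.
  - destruct (dec y y') as [<-|]; [|constructor; auto].
    inversion Hr; subst. destruct Hg as (?&?&?). destruct H1 as (?&?&?). simpl in *.
    constructor; auto. split; [|split]; simpl; eauto.
Qed.

Lemma push_red g r : gok g -> ok r -> red r -> red (push g r).
Proof.
  destruct g as [x y]; intros Hg Hr Hred. unfold push.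
  destruct (dec x y); auto.
  destruct r as [|[y' z] r'].
  - simpl; auto.
  - destruct (dec y y') as [<-|].
    + simpl in *. destruct Hred as (?&?&?). split; auto.
      intros <-. inversion Hr as [|? ? Hg' Hr']; subst. destruct Hg' as (?&?&?); destruct Hg as (?&?&?); simpl in *.
      apply n. apply antisym; auto.
    + simpl in *; auto.
Qed.

Lemma act_okred c s : ok c -> ok s -> red s -> ok (act c s) /\ red (act c s).
Proof.
  induction c as [|g c IH]; intros Hc Hs Hr; simpl; auto.
  inversion Hc; subst. destruct (IH H2 Hs Hr).
  split; [apply push_ok|apply push_red]; auto.
Qed.

Lemma nf_okred w : ok w -> ok (nf w) /\ red (nf w).
Proof. intros; apply act_okred; simpl; auto. constructor. Qed.

Lemma mstep_cons g a b : mstep inP le a b -> mstep inP le (g::a) (g::b).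
Proof.
  intros H; destruct H.
  - exact (mstep_id inP le x (g::u) w H).
  - exact (mstep_split inP le x y z (g::u) w H H0 H1 H2 H3).
Qed.

Lemma meq_cons g a b : meq a b -> meq (g::a) (g::b).
Proof.
  intros H; induction H.
  - apply rst_step, mstep_cons; auto.
  - apply rst_refl.
  - apply rst_sym; auto.
  - eapply rst_trans; eauto.
Qed.

Lemma meq_cons_push g r : gok g -> ok r -> meq (g::r) (push g r).
Proof.
  destruct g as [x y]; intros Hg Hr. destruct Hg as (Hx&Hy&Hxy); simpl in *. unfold push.
  destruct (dec x y) as [<-|].
  { apply rst_step. exact (mstep_id inP le x [] r Hx). }
  destruct r as [|[y' z] r']; [apply rst_refl|].
  destruct (dec y y') as [<-|]; [|apply rst_refl].
  inversion Hr; subst. destruct H1 as (?&?&?); simpl in *.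
  apply rst_sym, rst_step. exact (mstep_split inP le x y z [] r' Hx Hy H0 Hxy H1).
Qed.

Lemma meq_to_nf w : ok w -> meq w (nf w).
Proof.
  induction w as [|g w IH]; intros Hw; [apply rst_refl|].
  inversion Hw; subst.
  eapply rst_trans; [apply meq_cons, IH; auto|].
  apply meq_cons_push; auto. apply nf_okred; auto.
Qed.

Lemma nf_meq a b : ok a -> ok b -> nf a = nf b -> meq a b.
Proof.
  intros Ha Hb E. eapply rst_trans; [apply meq_to_nf; auto|].
  rewrite E. apply rst_sym, meq_to_nf; auto.
Qed.

Lemma act_push g r s : gok g -> ok r -> act (push g r) s = push g (act r s).
Proof.
  destruct g as [x y]; intros Hg Hr. unfold push at 1.
  destruct (dec x y) as [<-|]. { rewrite push_triv; reflexivity. }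
  destruct r as [|[y' z] r']; [reflexivity|].
  destruct (dec y y') as [<-|]; [|reflexivity].
  unfold act; cbn [fold_right]. inversion Hr as [|? ? Hg' Hr']; subst.
  rewrite push_comp; [reflexivity| apply Hg | apply Hg'].
Qed.

Lemma act_nf u s : ok u -> act u s = act (nf u) s.
Proof.
  induction u as [|g u IH]; intros Hu; [reflexivity|].
  inversion Hu; subst. simpl. rewrite IH by auto.
  unfold nf at 2. simpl. fold (nf u). rewrite act_push; auto. apply nf_okred; auto.
Qed.

Lemma push_red_cons x y w : x <> y -> hd_ne y w -> push (x,y) w = (x,y)::w.
Proof.
  intros H1 H2. unfold push. destruct (dec x y); try congruence.
  destruct w as [|[y' z] w']; auto. simpl in H2. destruct (dec y y'); congruence.
Qed.

Lemma nf_red w : red w -> nf w = w.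
Proof.
  induction w as [|[x y] w IH]; intros Hr; auto.
  simpl in Hr. destruct Hr as (?&?&?). unfold nf; simpl. fold (nf w). rewrite IH by auto.
  apply push_red_cons; auto.
Qed.

Lemma push_nil x y r : push (x,y) r = [] -> x = y /\ r = [].
Proof.
  unfold push. destruct (dec x y); auto.
  destruct r as [|[y' z] r']; [discriminate|]. destruct (dec y y'); discriminate.
Qed.

Lemma act_nil c s : act c s = [] -> s = [] /\ nf c = [].
Proof.
  induction c as [|[x y] c IH]; simpl; auto.
  intros H. apply push_nil in H. destruct H as [<- H]. destruct (IH H). split; auto.
  unfold nf; simpl. fold (nf c). rewrite H1. apply push_triv.
Qed.

Lemma gen_conical x y : ok x -> ok y -> meq (x ++ y) [] -> meq x [].
Proof.
  intros Hx Hy H. apply meq_nf in H. unfold nf in H. rewrite act_app in H.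
  apply act_nil in H. destruct H as [_ H].
  eapply rst_trans; [apply meq_to_nf; auto|]. rewrite H. apply rst_refl.
Qed.

Lemma push_inj x y r1 r2 : x <> y -> red r1 -> red r2 -> push (x,y) r1 = push (x,y) r2 -> r1 = r2.
Proof.
  intros Hxy H1 H2. unfold push. destruct (dec x y); try congruence.
  destruct r1 as [|[a1 b1] r1]; destruct r2 as [|[a2 b2] r2]; simpl in H1, H2;
  repeat match goal with |- context [dec ?a ?b] => destruct (dec a b) end;
  intros E; inversion E; subst; try congruence; intuition congruence.
Qed.

Lemma act_inj c s1 s2 : ok c -> ok s1 -> red s1 -> ok s2 -> red s2 -> act c s1 = act c s2 -> s1 = s2.
Proof.
  induction c as [|[x y] c IH]; intros Hc O1 R1 O2 R2 E; [exact E|].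
  unfold act in E; cbn [fold_right] in E; fold (act c s1) (act c s2) in E.
  inversion Hc; subst.
  destruct (dec x y) as [<-|Hn].
  - rewrite !push_triv in E. apply IH; auto.
  - apply push_inj in E; auto; try (apply act_okred; auto).
Qed.

Lemma gen_lcancel c a b : ok c -> ok a -> ok b -> meq (c ++ a) (c ++ b) -> meq a b.
Proof.
  intros Hc Ha Hb H. apply meq_nf in H. unfold nf in H. rewrite !act_app in H.
  fold (nf a) in H; fold (nf b) in H.
  apply nf_meq; auto.
  destruct (nf_okred a Ha); destruct (nf_okred b Hb).
  eapply act_inj; [exact Hc| | | | |exact H]; auto.
Qed.


Inductive PDiv : list (T*T) -> list (T*T) -> Prop :=
| pd_nil a : PDiv [] a
| pd_part x m y a : le x m -> le m y -> x <> m -> inP m -> PDiv [(x,m)] ((x,y)::a)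
| pd_cons g r a : PDiv r a -> PDiv (g::r) (g::a).

Definition Div r a := exists s, ok s /\ red s /\ a = act r s.

Lemma push_hd p q r : p <> q -> exists z w, push (p,q) r = (p,z)::w.
Proof.
  intros H. unfold push. destruct (dec p q); try congruence.
  destruct r as [|[a b] r']; eauto. destruct (dec q a); eauto.
Qed.

Lemma Div_PDiv r a : ok r -> red r -> Div r a -> PDiv r a.
Proof.
  revert a. induction r as [|[x y] r IH]; intros a Hr Rr [s (Os & Rs & E)]; subst a.
  { constructor. }
  inversion Hr as [|? ? Hg Hr']; subst. simpl in Rr. destruct Rr as (Hxy & Hhd & Rr').
  unfold act; cbn [fold_right]; fold (act r s).
  assert (IH' : PDiv r (act r s)) by (apply IH; auto; exists s; auto).
  unfold push. destruct (dec x y); try congruence.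
  remember (act r s) as t eqn:Et.
  destruct t as [|[y' z] t'].
  - constructor; auto.
  - destruct (dec y y') as [<-|]; [|constructor; auto].
    destruct r as [|[p q] r''].
    + simpl in Et. subst s. inversion Os as [|? ? Hg2 _]; subst.
      destruct Hg as (?&?&?); destruct Hg2 as (?&?&?); simpl in *.
      constructor; auto.
    + exfalso. simpl in Rr', Hhd. destruct Rr' as (Hpq & _ & _).
      unfold act in Et; cbn [fold_right] in Et.
      destruct (push_hd p q (fold_right push s r'') Hpq) as (z0 & w0 & E0).
      rewrite E0 in Et. inversion Et; congruence.
Qed.

Lemma PDiv_Div r a : ok a -> red a -> PDiv r a -> Div r a.
Proof.
  intros Oa Ra H. revert Oa Ra. induction H; intros Oa Ra.
  - exists a; split; auto.
  - inversion Oa as [|? ? Hg Oa']; subst. simpl in Ra. destruct Ra as (Hxy & Hhd & Ra').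
    destruct Hg as (Hx&Hy&Hle); simpl in *.
    destruct (dec m y) as [<-|Hmy].
    + exists a; split; [|split]; auto.
      unfold act; cbn [fold_right]. rewrite push_red_cons; auto.
    + exists ((m,y)::a); split; [|split].
      * constructor; auto. split; [|split]; auto.
      * simpl; auto.
      * unfold act; cbn [fold_right]. unfold push.
        destruct (dec x m); try congruence. destruct (dec m m); congruence.
  - inversion Oa as [|? ? Hg Oa']; subst. destruct g as [x y]. simpl in Ra. destruct Ra as (Hxy & Hhd & Ra').
    destruct (IHPDiv Oa' Ra') as [s (Os & Rs & E)].
    exists s; split; [|split]; auto.
    unfold act; cbn [fold_right]. fold (act r s). rewrite <- E.
    rewrite push_red_cons; auto.
Qed.

Fixpoint G (a b : list (T*T)) : list (T*T) :=
  match a with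
  | (x,y)::a' =>
    match b with
    | (x',y')::b' =>
      if dec x x' then
        if dec y y' then (x,y) :: G a' b'
        else (if dec (meet x y y') x then [] else [(x, meet x y y')])
      else []
    | [] => []
    end
  | [] => []
  end.

Lemma G_div a b : ok a -> ok b -> PDiv (G a b) a /\ PDiv (G a b) b.
Proof.
  revert b. induction a as [|[x y] a IH]; intros b Oa Ob.
  { split; constructor. }
  destruct b as [|[x' y'] b]; [split; constructor|].
  inversion Oa as [|? ? Ha Oa']; inversion Ob as [|? ? Hb Ob']; subst.
  simpl. destruct (dec x x') as [<-|]; [|split; constructor].
  destruct (dec y y') as [<-|].
  - destruct (IH b Oa' Ob'). split; constructor; auto.
  - destruct Ha as (Hx&Hy&Hxy); destruct Hb as (_&Hy'&Hxy'); simpl in *.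
    destruct (meet_spec x y y' Hx Hy Hy' Hxy Hxy') as (Hm & H1 & H2 & H3 & _).
    destruct (dec (meet x y y') x) as [E|NE]; [split; constructor|].
    split; constructor; auto.
Qed.

Lemma G_hd a b p q w : G a b = (p,q)::w -> exists q' a', a = (p,q')::a'.
Proof.
  destruct a as [|[x y] a]; simpl; [discriminate|].
  destruct b as [|[x' y'] b]; [discriminate|].
  destruct (dec x x'); [|discriminate].
  destruct (dec y y'). { intros E; inversion E; subst; eauto. }
  destruct (dec (meet x y y') x); [discriminate|]. intros E; inversion E; subst; eauto.
Qed.

Lemma G_okred a b : ok a -> ok b -> red a -> ok (G a b) /\ red (G a b).
Proof.
  revert b. induction a as [|[x y] a IH]; intros b Oa Ob Ra.
  { simpl; split; [constructor|exact I]. }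
  destruct b as [|[x' y'] b]; [simpl; split; [constructor|exact I]|].
  inversion Oa as [|? ? Ha Oa']; inversion Ob as [|? ? Hb Ob']; subst.
  simpl in Ra. destruct Ra as (Hxy0 & Hhd & Ra').
  simpl. destruct (dec x x') as [<-|]; [|split; [constructor|exact I]].
  destruct (dec y y') as [<-|].
  - destruct (IH b Oa' Ob' Ra'). split; [constructor; auto|].
    simpl. split; [auto|split; auto].
    destruct (G a b) as [|[p q] w] eqn:EG; simpl; auto.
    destruct (G_hd a b p q w EG) as (q' & a' & ->). exact Hhd.
  - destruct Ha as (Hx&Hy&Hxy); destruct Hb as (_&Hy'&Hxy'); simpl in *.
    destruct (meet_spec x y y' Hx Hy Hy' Hxy Hxy') as (Hm & H1 & H2 & H3 & _).
    destruct (dec (meet x y y') x) as [E|NE]; [split; [constructor|exact I]|].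
    split.
    + constructor; [split; [|split]; auto|constructor].
    + simpl. split; [congruence|auto].
Qed.

Lemma G_great_aux x y y' a b m : inP x -> inP y -> inP y' -> le x y -> le x y' ->
  le x m -> le m y -> le m y' -> x <> m -> inP m ->
  PDiv [(x,m)] (G ((x,y)::a) ((x,y')::b)).
Proof.
  intros Hx Hy Hy' Hxy Hxy' Hxm Hmy Hmy' Hne Hm. simpl.
  destruct (dec x x); [|congruence].
  destruct (dec y y') as [<-|].
  - constructor; auto.
  - destruct (meet_spec x y y' Hx Hy Hy' Hxy Hxy') as (HM & H1 & H2 & H3 & H4).
    destruct (dec (meet x y y') x) as [E|NE].
    + exfalso. apply Hne. apply antisym; auto. rewrite <- E. apply H4; auto.
    + constructor; auto.
Qed.

Lemma G_great a : forall b e, ok a -> ok b -> red a -> PDiv e a -> PDiv e b -> PDiv e (G a b).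
Proof.
  induction a as [|[x y] a IH]; intros b e Oa Ob Ra Pa Pb.
  { inversion Pa; subst. constructor. }
  destruct b as [|[x' y'] b]; [inversion Pb; subst; constructor|].
  inversion Oa as [|? ? Ha Oa']; inversion Ob as [|? ? Hb Ob']; subst.
  destruct Ha as (Hx&Hy&Hxy); destruct Hb as (Hx'&Hy'&Hxy'); simpl in *.
  simpl in Ra. destruct Ra as (Hxy0 & Hhd & Ra').
  inversion Pa; subst.
  - constructor.
  -
    inversion Pb; subst.
    + apply G_great_aux; auto.
    + apply G_great_aux; auto.
  -
    inversion Pb; subst.
    + apply G_great_aux; auto.
    + simpl. match goal with |- context [dec ?u ?u] => destruct (dec u u); [|congruence] end. match goal with |- context [dec ?u ?u] => destruct (dec u u); [|congruence] end.
      constructor. apply IH; auto.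
Qed.

Lemma gen_lgcd a b : ok a -> ok b -> exists d, ok d /\ ldiv ok meq d a /\ ldiv ok meq d b /\
      forall e, ok e -> ldiv ok meq e a -> ldiv ok meq e b -> ldiv ok meq e d.
Proof.
  intros Oa Ob.
  destruct (nf_okred a Oa) as [Ona Rna]; destruct (nf_okred b Ob) as [Onb Rnb].
  destruct (G_okred (nf a) (nf b) Ona Onb Rna) as [Od Rd].
  destruct (G_div (nf a) (nf b) Ona Onb) as [Pa Pb].
  exists (G (nf a) (nf b)).
  assert (Hdiv : forall w, ok w -> PDiv (G (nf a) (nf b)) (nf w) -> ldiv ok meq (G (nf a) (nf b)) w).
  { intros w Ow P. destruct (nf_okred w Ow) as [Onw Rnw].
    destruct (PDiv_Div _ _ Onw Rnw P) as [s (Os & Rs & E)].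
    exists s; split; auto. apply nf_meq; auto.
    - apply Forall_app; auto.
    - rewrite E. unfold nf. rewrite act_app. fold (nf s). rewrite (nf_red s Rs). reflexivity. }
  split; [auto|split; [apply Hdiv; auto|split; [apply Hdiv; auto|]]].
  intros e Oe [x (Ox & Ex)] [y (Oy & Ey)].
  destruct (nf_okred e Oe) as [One Rne].
  assert (Dv : forall w z, ok w -> ok z -> meq w (e ++ z) -> Div (nf e) (nf w)).
  { intros w z Ow Oz E. apply meq_nf in E. destruct (nf_okred z Oz).
    exists (nf z); split; [|split]; auto. rewrite E. unfold nf at 1.
    rewrite act_app. fold (nf z). apply act_nf; auto. }
  assert (P1 := Div_PDiv _ _ One Rne (Dv a x Oa Ox Ex)).
  assert (P2 := Div_PDiv _ _ One Rne (Dv b y Ob Oy Ey)).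
  assert (P := G_great _ _ _ Ona Onb Rna P1 P2).
  destruct (PDiv_Div _ _ Od Rd P) as [s (Os & Rs & E)].
  exists s; split; auto. apply nf_meq; auto.
  - apply Forall_app; auto.
  - rewrite (nf_red (G (nf a) (nf b)) Rd). unfold nf. rewrite act_app. fold (nf s). rewrite (nf_red s Rs).
    fold (nf a) (nf b). rewrite E. symmetry. apply act_nf; auto.
Qed.

End Gen.

From Stdlib Require Import ClassicalEpsilon FunctionalExtensionality PropExtensionality.
Import ListNotations.

Definition swp {T : Type} (p : T*T) : T*T := (snd p, fst p).
Definition op {T : Type} (w : list (T*T)) : list (T*T) := rev (map swp w).

Lemma op_app {T} (u w : list (T*T)) : op (u ++ w) = op w ++ op u.
Proof. unfold op. rewrite map_app, rev_app_distr. reflexivity. Qed.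

Lemma op_op {T} (w : list (T*T)) : op (op w) = w.
Proof. unfold op. rewrite map_rev, rev_involutive, map_map.
  induction w as [|[a b] w IH]; [reflexivity|]. cbn. unfold swp at 1 2. simpl. rewrite IH. reflexivity. Qed.

Lemma op_cons {T} (u w : list (T*T)) g : op (u ++ g :: w) = op w ++ swp g :: op u.
Proof. rewrite op_app. unfold op at 1. simpl. rewrite <- app_assoc. reflexivity. Qed.

Lemma op_cons2 {T} (u w : list (T*T)) g1 g2 : op (u ++ g1 :: g2 :: w) = op w ++ swp g2 :: swp g1 :: op u.
Proof. unfold op. rewrite map_app, rev_app_distr. simpl. rewrite <- !app_assoc. reflexivity. Qed.

Lemma ok_op {T} (inP : T -> Prop) le w : word_ok inP le w -> word_ok inP (fun a b => le b a) (op w).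
Proof.
  unfold word_ok, op. intros H. apply Forall_rev. apply Forall_map.
  eapply Forall_impl; [|exact H]. intros [a b] (?&?&?); simpl in *. split; [|split]; auto.
Qed.

Lemma mstep_op {T} (inP : T -> Prop) le a b : mstep inP le a b -> mstep inP (fun a b => le b a) (op a) (op b).
Proof.
  intros H; destruct H.
  - rewrite op_cons, op_app. apply mstep_id; auto.
  - rewrite op_cons, op_cons2. simpl. apply mstep_split; auto.
Qed.

Lemma meq_op {T} (inP : T -> Prop) le a b : meq inP le a b -> meq inP (fun a b => le b a) (op a) (op b).
Proof.
  intros H; induction H.
  - apply rst_step, mstep_op; auto.
  - apply rst_refl.
  - apply rst_sym; auto.
  - eapply rst_trans; eauto.
Qed.

Lemma meq_op' {T} (inP : T -> Prop) le a b : meq inP (fun a b => le b a) (op a) (op b) -> meq inP le a b.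
Proof. intros H. apply meq_op in H. rewrite !op_op in H. exact H. Qed.

Lemma ok_op' {T} (inP : T -> Prop) le w : word_ok inP (fun a b => le b a) (op w) -> word_ok inP le w.
Proof. intros H. apply ok_op in H. rewrite op_op in H. exact H. Qed.

Lemma rcancel {T} (inP : T -> Prop) le
  (dec : forall a b : T, {a = b} + {a <> b})
  (antisym : forall a b, le a b -> le b a -> a = b)
  (letrans : forall a b c, le a b -> le b c -> le a c) c a b :
  word_ok inP le c -> word_ok inP le a -> word_ok inP le b -> meq inP le (a ++ c) (b ++ c) -> meq inP le a b.
Proof.
  intros Hc Ha Hb H. apply meq_op in H. rewrite !op_app in H.
  apply meq_op'. apply (gen_lcancel T inP (fun a b => le b a) dec (fun a b h1 h2 => antisym a b h2 h1)
     (fun a b c h1 h2 => letrans c b a h2 h1) (op c)); auto using ok_op.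
Qed.

Lemma rgcd {T} (inP : T -> Prop) le
  (dec : forall a b : T, {a = b} + {a <> b})
  (antisym : forall a b, le a b -> le b a -> a = b)
  (lerefl : forall a, le a a)
  (letrans : forall a b c, le a b -> le b c -> le a c)
  (join : T -> T -> T -> T)
  (join_spec : forall x y y', inP x -> inP y -> inP y' -> le y x -> le y' x ->
  inP (join x y y') /\ le (join x y y') x /\ le y (join x y y') /\ le y' (join x y y') /\
  forall t, inP t -> le t x -> le y t -> le y' t -> le (join x y y') t) a b :
  word_ok inP le a -> word_ok inP le b ->
  exists d, word_ok inP le d /\ rdiv (word_ok inP le) (meq inP le) d a /\ rdiv (word_ok inP le) (meq inP le) d b /\
      forall e, word_ok inP le e -> rdiv (word_ok inP le) (meq inP le) e a -> rdiv (word_ok inP le) (meq inP le) e b ->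
        rdiv (word_ok inP le) (meq inP le) e d.
Proof.
  intros Ha Hb.
  destruct (gen_lgcd T inP (fun a b => le b a) dec (fun a b h1 h2 => antisym a b h2 h1) lerefl
     (fun a b c h1 h2 => letrans c b a h2 h1) join join_spec (op a) (op b) (ok_op _ _ _ Ha) (ok_op _ _ _ Hb))
    as (d & Od & [x (Ox & Ex)] & [y (Oy & Ey)] & Gr).
  exists (op d). split; [apply ok_op'; rewrite op_op; exact Od|].
  split; [|split].
  - exists (op x). split; [apply ok_op'; rewrite op_op; exact Ox|].
    apply meq_op'. rewrite op_app, !op_op. exact Ex.
  - exists (op y). split; [apply ok_op'; rewrite op_op; exact Oy|].
    apply meq_op'. rewrite op_app, !op_op. exact Ey.
  - intros e Oe [u (Ou & Eu)] [v (Ov & Ev)].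
    destruct (Gr (op e) (ok_op _ _ _ Oe)) as [z (Oz & Ez)].
    + exists (op u). split; [apply ok_op; auto|]. apply meq_op in Eu. rewrite op_app in Eu. exact Eu.
    + exists (op v). split; [apply ok_op; auto|]. apply meq_op in Ev. rewrite op_app in Ev. exact Ev.
    + exists (op z). split; [apply ok_op'; rewrite op_op; exact Oz|].
      apply meq_op'. rewrite op_app, !op_op. exact Ez.
Qed.

Theorem corollary7p9 (V : Type) (K : (V -> Prop) -> Prop)
  (HK : simplicial_complex K) :
  interval_monoid_gcd K (@subpred V).
Proof.
  assert (dec : forall a b : V -> Prop, {a = b} + {a <> b}) by (intros; apply excluded_middle_informative).
  assert (antisym : forall a b : V -> Prop, subpred a b -> subpred b a -> a = b).
  { intros a b H1 H2. apply functional_extensionality. intros v.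
    apply propositional_extensionality. split; auto. }
  assert (lerefl : forall a : V -> Prop, subpred a a) by (intros a v; auto).
  assert (letrans : forall a b c : V -> Prop, subpred a b -> subpred b c -> subpred a c)
    by (intros a b c H1 H2 v Hv; auto).
  assert (meet_spec : forall x y y', K x -> K y -> K y' -> subpred x y -> subpred x y' ->
    K (fun v => y v /\ y' v) /\ subpred x (fun v => y v /\ y' v) /\ subpred (fun v => y v /\ y' v) y /\
    subpred (fun v => y v /\ y' v) y' /\
    forall t, K t -> subpred x t -> subpred t y -> subpred t y' -> subpred t (fun v => y v /\ y' v)).
  { intros x y y' Kx Ky Ky' H1 H2. split; [|split; [|split; [|split]]].
    - destruct (sc_nonempty HK x Kx) as [v Hv]. eapply (sc_down HK Ky).
      + exists v; auto.
      + intros w [? ?]; auto.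
    - intros v Hv; auto.
    - intros v [? ?]; auto.
    - intros v [? ?]; auto.
    - intros t _ _ Ht1 Ht2 v Hv; auto. }
  assert (join_spec : forall x y y', K x -> K y -> K y' -> subpred y x -> subpred y' x ->
    K (fun v => y v \/ y' v) /\ subpred (fun v => y v \/ y' v) x /\ subpred y (fun v => y v \/ y' v) /\
    subpred y' (fun v => y v \/ y' v) /\
    forall t, K t -> subpred t x -> subpred y t -> subpred y' t -> subpred (fun v => y v \/ y' v) t).
  { intros x y y' Kx Ky Ky' H1 H2. split; [|split; [|split; [|split]]].
    - destruct (sc_nonempty HK y Ky) as [v Hv]. eapply (sc_down HK Kx).
      + exists v; auto.
      + intros w [?|?]; auto.
    - intros w [?|?]; auto.
    - intros v Hv; auto.
    - intros v Hv; auto.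
    - intros t _ _ Ht1 Ht2 v [?|?]; auto. }
  unfold interval_monoid_gcd, is_gcd_monoid.
  split; [|split; [|split; [|split]]].
  - intros x y Hx Hy H. exact (gen_conical _ K (@subpred V) dec antisym letrans x y Hx Hy H).
  - intros c a b Hc Ha Hb H. exact (gen_lcancel _ K (@subpred V) dec antisym letrans c a b Hc Ha Hb H).
  - intros c a b Hc Ha Hb H. exact (rcancel K (@subpred V) dec antisym letrans c a b Hc Ha Hb H).
  - intros a b Ha Hb. exact (gen_lgcd _ K (@subpred V) dec antisym lerefl letrans _ meet_spec a b Ha Hb).
  - intros a b Ha Hb. exact (rgcd K (@subpred V) dec antisym lerefl letrans _ join_spec a b Ha Hb).
Qed.
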